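(* Let $\mathbf b=b_0b_1b_2\cdots\in\{1,-1\}^{\mathbb N}$. For each $t\ge 0$ there is a nonnegative integer $\ell_t$ such that $D_{k,b_k}(\ell_t,\ell_t+2^{t+2}-1)=0$ for all $k\ge t$.
   Context: For $b\in\{-1,1\}$, $k\ge0$ and integers $\ell\le n$, $D_{k,b}(\ell,n)$ denotes the number of integers $i$ with $\ell<i\le n$ and $i\equiv(2+b)\cdot 2^k \pmod{2^{k+2}}$. *)

(* Defs.v *)
From mathcomp Require Import all_boot all_order all_algebra.
Set Implicit Arguments. Unset Strict Implicit. Unset Printing Implicit Defensive.
Import Order.TTheory GRing.Theory Num.Theory.
Local Open Scope ring_scope.

(* D_{k,b}(l,n) = #{ i in Z : l < i <= n, i = (2+b) 2^k mod 2^(k+2) },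
   for integers l <= n.  The integers i are l + j + 1 for 0 <= j < n - l. *)
Definition D (k : nat) (b : int) (l n : int) : nat :=
  \sum_(0 <= j < `|n - l|%N)
     ((l + (j.+1)%:Z == (2 + b) * 2 ^+ k %[mod 2 ^+ (k.+2)])%Z : nat).

(* Main.v *)
Require Import Defs.
From mathcomp Require Import all_boot all_order all_algebra.
From mathcomp Require Import zify ring.
Import Order.TTheory GRing.Theory Num.Theory.

Lemma pow2z (k : nat) : ((2 : int) ^+ k)%R = Posz (2 ^ k).
Proof. by rewrite -natz natrX. Qed.

Definition uu (c : nat -> nat) t :=
  if c t.+1 == c t then 2 * (4 - c (t.+3)) else 4 - c (t.+2).
Definition LL (c : nat -> nat) t := 4 * (uu c t - 1) + c t.

Lemma small (c : nat -> nat) (hc : forall k, c k = 1 \/ c k = 3) t d i :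
  0 < i < 4 -> (LL c t + i) %% 2 ^ d.+2 != (2 ^ d * c (t + d)) %% 2 ^ d.+2.
Proof.
move=> /andP[i0 i4].
have [d4|d3] := leqP 4 d.
  have -> : 2 ^ d.+2 = 64 * 2 ^ (d - 4) by rewrite -[64]/(2^6) -expnD; congr (_ ^ _); lia.
  have -> : 2 ^ d = 16 * 2 ^ (d - 4) by rewrite -[16]/(2^4) -expnD; congr (_ ^ _); lia.
  have p1 : 0 < 2 ^ (d - 4) by rewrite expn_gt0.
  have hL : LL c t + i < 27.
    rewrite /LL /uu; case: (hc t) => ->; case: (hc t.+1) => ->;
    case: (hc t.+2) => ->; case: (hc t.+3) => -> /=; lia.
  have hL2 : LL c t + i != 16.
    rewrite /LL /uu; case: (hc t) => ->; case: (hc t.+1) => ->;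
    case: (hc t.+2) => ->; case: (hc t.+3) => -> /=; lia.
  move: (2 ^ (d - 4)) p1 => p p1.
  case: (hc (t + d)) => ->.
    rewrite !modn_small; lia.
  rewrite !modn_small; lia.
case: d d3 => [|[|[|[|d]]]] // _; rewrite /LL /uu ?addn0 ?addn1 ?addn2 ?addn3;
  case: (hc t) => ->; case: (hc t.+1) => ->;
  case: (hc t.+2) => ->; case: (hc t.+3) => -> /=;
  case: i i0 i4 => [|[|[|[|i]]]] //.
Qed.

Lemma core (c : nat -> nat) (hc : forall k, c k = 1 \/ c k = 3) t k i :
  t <= k -> 0 < i < 2 ^ t.+2 ->
  (2 ^ t * LL c t + i) %% 2 ^ k.+2 != (2 ^ k * c k) %% 2 ^ k.+2.
Proof.
move=> tk /andP[i0 it]; apply/negP => /eqP E.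
have dv : 2 ^ t %| 2 ^ k.+2 by apply: dvdn_exp2l; lia.
have dk : 2 ^ t %| 2 ^ k by apply: dvdn_exp2l.
have di : 2 ^ t %| i.
  have := congr1 (modn^~ (2 ^ t)) E.
  rewrite !(modn_dvdm _ dv) [2 ^ t * _]mulnC modnMDl => H.
  by rewrite /dvdn H; apply: dvdn_mulr.
have p0 : 0 < 2 ^ t by rewrite expn_gt0.
have [d kd] : exists d, k = t + d by exists (k - t); lia.
case/dvdnP: di E i0 it => i' ->; rewrite kd [i' * _]mulnC -mulnDr.
have -> : 2 ^ (t + d).+2 = 2 ^ t * 2 ^ d.+2 by rewrite -expnD; congr (_ ^ _); lia.
rewrite expnD -mulnA -!muln_modr => /eqP; rewrite eqn_pmul2l // => H.
rewrite muln_gt0 p0 /= => i0.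
have -> : 2 ^ t.+2 = 2 ^ t * 4 by rewrite expnSr expnSr -mulnA.
rewrite ltn_pmul2l // => i4.
by move: (@small c hc t d i') H; rewrite i0 i4 => /(_ isT) /negP.
Qed.

Local Open Scope ring_scope.
Theorem lemma5p1 (b : nat -> int) (hb : forall k, b k = 1 \/ b k = -1) (t : nat) :
  exists l : int, 0 <= l /\
    forall k : nat, (t <= k)%N -> D k (b k) l (l + 2 ^+ (t.+2) - 1) = 0%N.
Proof.
pose c k := if b k == 1 then 3%N else 1%N.
have hc : forall k, c k = 1%N \/ c k = 3%N.
  by move=> k; rewrite /c; case: ifP => _; [right|left].
have cb : forall k, 2 + b k = Posz (c k).
  by move=> k; rewrite /c; case: (hb k) => ->.
exists (Posz (2 ^ t * LL c t)%N); split => // k tk.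
rewrite /D.
have -> : absz (Posz (2 ^ t * LL c t)%N + 2 ^+ t.+2 - 1 - Posz (2 ^ t * LL c t)%N)%R = (2 ^ t.+2 - 1)%N.
  have -> : forall x y : int, (x + y - 1 - x = y - 1)%R by move=> x y; ring.
  rewrite pow2z -(@subnK 1 (2 ^ t.+2)) ?expn_gt0 // PoszD addrK.
  by rewrite addnK.
rewrite big_nat_cond; apply: big1 => j /andP[/andP[_ hj] _].
rewrite cb pow2z pow2z -PoszM -PoszD !modz_nat eqz_nat.
suff /negbTE -> : ((2 ^ t * LL c t + j.+1) %% 2 ^ k.+2 != (c k * 2 ^ k) %% 2 ^ k.+2)%N by [].
rewrite [(c k * _)%N]mulnC; apply: core => //; apply/andP; split => //.
move: hj; have : (0 < 2 ^ t.+2)%N by rewrite expn_gt0.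
lia.

Qed.
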